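(* Let $k>0$, $N\in\mathbb{N}^+$, $h=\frac{1}{N+1}$, and let $\mathcal{A}_h$ be the $(N+1)\times(N+1)$ matrix defined below acting on $\mathbb{Y}_h=\mathbb{C}^{N+1}$ with the inner product $\langle\cdot,\cdot\rangle_{\mathbb{Y}_h}$ defined below. Then for every $Y_h=(y_1,\dots,y_{N+1})^\top\in\mathbb{Y}_h$, $$\mathrm{Re}\,\langle\mathcal{A}_hY_h,Y_h\rangle_{\mathbb{Y}_h}=-k|y_{N+1}|^2,$$ so $\mathcal{A}_h$ is dissipative on $\mathbb{Y}_h$ for every such $h\in(0,1)$.
   Context: Let $D_h$ be the $(N+1)\times(N+1)$ lower bidiagonal matrix $D_h=\frac12(\text{ones on the diagonal and on the first subdiagonal})$, i.e. $(D_hY)_j=\frac{y_{j-1}+y_j}{2}$ with the convention $y_0=0$; and let $M_h=\frac1h(\text{$-1$ on the diagonal, $1$ on the first superdiagonal})$, an $(N+1)\times(N+1)$ upper bidiagonal matrix. Both are invertible. Let $e_{N+1}=(0,\dots,0,1)^\top$. For $Y_h=(y_1,\dots,y_{N+1})^\top\in\mathbb{C}^{N+1}$ let $Z_h=(z_0,\dots,z_N)^\top$ (the ''shadow element'' of $Y_h$) be the unique solution of $D_h^\top Z_h=-M_h^\top Y_h+\tfrac{ik}{2}y_{N+1}e_{N+1}$, and define $$\mathcal{A}_hY_h=D_h^{-1}\Big[-iM_hZ_h-\tfrac{k}{h}y_{N+1}e_{N+1}\Big]=D_h^{-1}\Big[iM_h(D_h^\top)^{-1}\big(M_h^\top Y_h-\tfrac{ik}{2}y_{N+1}e_{N+1}\big)-\tfrac{k}{h}y_{N+1}e_{N+1}\Big].$$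 Equivalently, with $y_0:=0$, $z_{N+1}:=-iky_{N+1}$, $u_{j+\frac12}=\frac{u_j+u_{j+1}}2$, $\delta_xu_{j+\frac12}=\frac{u_{j+1}-u_j}{h}$, one has $z_{j+\frac12}=\delta_xy_{j+\frac12}$ for $0\le j\le N$, and $\widetilde Y_h=\mathcal{A}_hY_h$ is characterized by $\widetilde y_{j+\frac12}=-i\delta_xz_{j+\frac12}$ for $0\le j\le N$ (with $\widetilde y_0=0$). This is the order-reduction semi-discretization of $w_t=-iw_{xx}$, $w(0,t)=0$, $w_x(1,t)=-ikw(1,t)$. The inner product on $\mathbb{Y}_h=\mathbb{C}^{N+1}$ is $\langle Y_h,\widetilde Y_h\rangle_{\mathbb{Y}_h}=h\langle D_hY_h,D_h\widetilde Y_h\rangle$, where $\langle\cdot,\cdot\rangle$ is the standard inner product of $\mathbb{C}^{N+1}$. *)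

(* Defs.v *)
From mathcomp Require Import all_boot all_order all_algebra.
Set Implicit Arguments. Unset Strict Implicit. Unset Printing Implicit Defensive.
Import Order.TTheory GRing.Theory Num.Theory.
Local Open Scope ring_scope.

(* Indices: entry (j : 'I_(N.+1)) of a column vector corresponds to the
   paper's index j+1, i.e. Y j 0 = y_{j+1}; ord_max corresponds to N+1. *)

Section Defs.
Variable C : numClosedFieldType.

Definition hN (N : nat) : C := (N.+1%:R)^-1.

Definition Dh (N : nat) : 'M[C]_(N.+1) :=
  \matrix_(i, j) (if (i == j :> nat) || (i == j.+1 :> nat) then 2^-1 else 0).

Definition Mh (N : nat) : 'M[C]_(N.+1) :=
  \matrix_(i, j) ((hN N)^-1 *
     (if i == j :> nat then -1 else if j == i.+1 :> nat then 1 else 0)).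

Definition eN (N : nat) : 'cV[C]_(N.+1) := delta_mx ord_max 0.

Definition ylast (N : nat) (Y : 'cV[C]_(N.+1)) : C := Y ord_max 0.

Definition shadow (N : nat) (k : C) (Y : 'cV[C]_(N.+1)) : 'cV[C]_(N.+1) :=
  invmx (Dh N)^T *m (- ((Mh N)^T *m Y) + (('i * k / 2) * ylast Y) *: eN N).

Definition Ah (N : nat) (k : C) (Y : 'cV[C]_(N.+1)) : 'cV[C]_(N.+1) :=
  invmx (Dh N) *m (- ('i *: (Mh N *m shadow k Y)) - ((k / hN N) * ylast Y) *: eN N).

Definition stdip (N : nat) (u v : 'cV[C]_(N.+1)) : C :=
  \sum_(j < N.+1) u j 0 * (v j 0)^*.

Definition ipY (N : nat) (u v : 'cV[C]_(N.+1)) : C :=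
  hN N * stdip (Dh N *m u) (Dh N *m v).

End Defs.

(* Main.v *)
Require Import Defs.
From mathcomp Require Import all_boot all_order all_algebra.
From mathcomp Require Import ring.
Import Order.TTheory GRing.Theory Num.Theory.
Local Open Scope ring_scope.
Section Aux.
Set Implicit Arguments. Unset Strict Implicit. Unset Printing Implicit Defensive.

Section H.
Variable C : numClosedFieldType.
Variable N : nat.
Implicit Types u v : 'cV[C]_(N.+1).

Lemma stdip_adj (A : 'M[C]_(N.+1)) u v :
  stdip (A *m u) v = stdip u ((map_mx Num.conj A)^T *m v).
Proof.
rewrite /stdip.
under eq_bigr => j _ do rewrite mxE mulr_suml /=.
rewrite exchange_big /=; apply: eq_bigr => l _.
rewrite !mxE rmorph_sum mulr_sumr /=; apply: eq_bigr => j _.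
by rewrite !mxE rmorphM /= conjCK mulrCA mulrA.
Qed.

Lemma stdipDl u1 u2 v : stdip (u1 + u2) v = stdip u1 v + stdip u2 v.
Proof. by rewrite /stdip -big_split; apply: eq_bigr => j _; rewrite mxE mulrDl. Qed.
Lemma stdipNl u v : stdip (- u) v = - stdip u v.
Proof. by rewrite /stdip -sumrN; apply: eq_bigr => j _; rewrite mxE mulNr. Qed.
Lemma stdipZl a u v : stdip (a *: u) v = a * stdip u v.
Proof. by rewrite /stdip mulr_sumr; apply: eq_bigr => j _; rewrite mxE mulrA. Qed.
Lemma stdipel v : stdip (eN C N) v = (v ord_max 0)^*.
Proof.
rewrite /stdip (bigD1 ord_max) //= big1 ?addr0.
  by rewrite mxE !eqxx mul1r.
by move=> j /negbTE hj; rewrite mxE hj mul0r.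
Qed.
Lemma stdipZr a u v : stdip u (a *: v) = a^* * stdip u v.
Proof. by rewrite /stdip mulr_sumr; apply: eq_bigr => j _; rewrite mxE rmorphM mulrCA. Qed.
Lemma stdipDr u v1 v2 : stdip u (v1 + v2) = stdip u v1 + stdip u v2.
Proof. by rewrite /stdip -big_split; apply: eq_bigr => j _; rewrite mxE rmorphD mulrDr. Qed.
Lemma stdipNr u v : stdip u (- v) = - stdip u v.
Proof. by rewrite /stdip -sumrN; apply: eq_bigr => j _; rewrite mxE rmorphN mulrN. Qed.
Lemma stdip_ge0 u : 0 <= stdip u u.
Proof. by apply: sumr_ge0 => j _; apply: mul_conjC_ge0. Qed.

Lemma conj_hN : (hN C N)^* = hN C N.
Proof. by rewrite /hN fmorphV rmorph_nat. Qed.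
Lemma conj_hNV : ((hN C N)^-1)^* = (hN C N)^-1.
Proof. by rewrite /hN invrK rmorph_nat. Qed.
Lemma conj_2V : ((2:C)^-1)^* = 2^-1.
Proof. by rewrite fmorphV rmorph_nat. Qed.

Lemma Dh_real : map_mx Num.conj (Dh C N) = Dh C N.
Proof. by apply/matrixP => i j; rewrite !mxE; case: ifP; rewrite ?conj_2V ?rmorph0. Qed.
Lemma Mh_real : map_mx Num.conj (Mh C N) = Mh C N.
Proof.
apply/matrixP => i j; rewrite !mxE rmorphM /= conj_hNV.
by case: ifP; rewrite ?rmorphN1 //; case: ifP; rewrite ?rmorph1 ?rmorph0.
Qed.

Lemma Dh_unit : Dh C N \in unitmx.
Proof.
rewrite unitmxE det_trig.
  rewrite unitfE; apply/prodf_neq0 => i _; rewrite mxE eqxx /=.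
  by rewrite invr_eq0 pnatr_eq0.
apply/forallP => i; apply/forallP => j; apply/implyP => hij.
rewrite mxE; case: ifP => // /orP [/eqP e|/eqP e]; exfalso; move: hij; rewrite e ?ltnn //.
by rewrite ltnNge leqnSn.
Qed.

Lemma MhT_eq : (Mh C N)^T = (hN C N)^-1 *: (2 *: Dh C N - 2%:M).
Proof.
apply/matrixP => i j; rewrite !mxE.
have [e|ne] := eqVneq (val i) (val j).
  have -> : i = j by apply: val_inj.
  rewrite !eqxx /= mulr1n; congr (_ * _).
  by rewrite mulfV ?pnatr_eq0 // -opprB; congr (- _); ring.
have -> : (i == j) = false by apply/negbTE; apply: contra ne => /eqP ->.
rewrite /= mulr0n subr0.
by case: ifP => _; rewrite ?mulr0 // mulfV ?pnatr_eq0.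
Qed.

Lemma comm_MD : (Mh C N)^T *m Dh C N = Dh C N *m (Mh C N)^T.
Proof.
rewrite MhT_eq -scalemxAl -scalemxAr; congr (_ *: _).
by rewrite mulmxBl mulmxBr -scalemxAl -scalemxAr mul_mx_scalar mul_scalar_mx.
Qed.
End H.
End Aux.

Lemma a_last (C : numClosedFieldType) n (Y : 'cV[C]_(n.+2)) :
  ((Mh C n.+1)^T *m Y) ord_max 0 = (hN C n.+1)^-1 * (Y (inord n) 0 - Y ord_max 0).
Proof.
rewrite mxE !big_ord_recr /= big1 ?add0r.
  have -> : widen_ord (leqnSn n.+1) ord_max = inord n :> 'I_n.+2.
    by apply: val_inj; rewrite /= inordK.
  rewrite !mxE /= !eqxx /= inordK // (ltn_eqF (ltnSn n)) eqxx; ring.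
move=> i _; rewrite !mxE /= eqSS (gtn_eqF (ltn_ord i)).
by rewrite (ltn_eqF (leq_trans (ltn_ord i) (leqnSn n))) mulr0 mul0r.
Qed.

Lemma D_last (C : numClosedFieldType) n (Y : 'cV[C]_(n.+2)) :
  (Dh C n.+1 *m Y) ord_max 0 = 2^-1 * (Y (inord n) 0 + Y ord_max 0).
Proof.
rewrite mxE !big_ord_recr /= big1 ?add0r.
  have -> : widen_ord (leqnSn n.+1) ord_max = inord n :> 'I_n.+2.
    by apply: val_inj; rewrite /= inordK.
  rewrite !mxE /= !eqxx /= inordK // eqxx orbT mulrDr //.
move=> i _; rewrite !mxE /= eqSS (gtn_eqF (ltn_ord i)).
by rewrite (gtn_eqF (leq_trans (ltn_ord i) (leqnSn n))) mul0r.
Qed.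

Theorem lemma2 (C : numClosedFieldType) (k : C) (N : nat)
  (hk : 0 < k) (hN : (0 < N)%N) (Y : 'cV[C]_(N.+1)) :
  'Re (ipY (Ah k Y) Y) = - k * `|ylast Y| ^+ 2
  /\ 'Re (ipY (Ah k Y) Y) <= 0.
Proof.
rename hN into hN0.
case: N hN0 Y => [//|n] _ Y.
set a := (Mh C n.+1)^T *m Y.
set z := shadow k Y.
set y := ylast Y.
have F1 : (Dh C n.+1)^T *m z = - a + ('i * k / 2 * y) *: eN C n.+1.
  by rewrite /z /shadow mulKVmx // unitmx_tr Dh_unit.
have F2 : Dh C n.+1 *m Ah k Y = - ('i *: (Mh C n.+1 *m z)) - (k / hN C n.+1 * y) *: eN C n.+1.
  by rewrite /Ah mulKVmx // Dh_unit.
have E1 : stdip (Mh C n.+1 *m z) (Dh C n.+1 *m Y) = - stdip a a + ('i * k / 2 * y) * (a ord_max 0)^*.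
  rewrite stdip_adj Mh_real mulmxA comm_MD -mulmxA -/a.
  have DT : (map_mx Num.conj (Dh C n.+1)^T)^T = Dh C n.+1.
    by rewrite -[RHS]Dh_real; apply/matrixP => i j; rewrite !mxE.
  rewrite -[X in stdip _ (X *m _)]DT -stdip_adj F1.
  by rewrite stdipDl stdipNl stdipZl stdipel.
have E2 : ipY (Ah k Y) Y = hN C n.+1 * (- 'i * (- stdip a a + ('i * k / 2 * y) * (a ord_max 0)^*)
      - (k / hN C n.+1 * y) * ((Dh C n.+1 *m Y) ord_max 0)^*).
  by rewrite /ipY F2 stdipDl stdipNl !stdipZl E1 stdipNl stdipZl stdipel mulNr.
have hi : forall x : C, 'i * ('i * x) = - x.
  by move=> x; rewrite mulrA -expr2 sqrCi mulN1r.
have hn : (n.+2%:R : C) != 0 by rewrite pnatr_eq0.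
have key : ipY (Ah k Y) Y = - k * `|y| ^+ 2 + 'i * (hN C n.+1 * stdip a a).
  rewrite E2 a_last D_last -/y normCK.
  have -> : Y ord_max 0 = y by [].
  rewrite !rmorphM /= rmorphB rmorphD /= conj_hNV conj_2V.
  have -> : (- 'i * (- stdip a a + 'i * k / 2 * y * ((hN C n.+1)^-1 * ((Y (inord n) 0)^* - y^*))))
     = 'i * stdip a a + k / 2 * y * ((hN C n.+1)^-1 * ((Y (inord n) 0)^* - y^*)).
    by rewrite mulNr mulrDr -!mulrA hi; ring.
  rewrite /hN; field; by rewrite -natrD pnatr_eq0.
have hyr : - k * `|y| ^+ 2 \is Num.real.
  apply: rpredM; [rewrite realN; exact: gtr0_real | apply: rpredX; exact: normr_real].
have hsr : hN C n.+1 * stdip a a \is Num.real.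
  by apply: ger0_real; rewrite mulr_ge0 ?stdip_ge0 // invr_ge0 ler0n.
rewrite key Re_rect //; split => //.
rewrite mulNr oppr_le0; apply: mulr_ge0; [exact: ltW | by rewrite exprn_ge0].
Qed.
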